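(* Let $f\in\mathcal{F}\{y_0,\ldots,y_n\}$ be a nonzero differentially homogeneous differential polynomial of degree $m$, not lying in $\mathcal{F}$, and let $\mathscr{R}$ be any ranking of $y_0,\ldots,y_n$. Then both the initial and the separant of $f$ with respect to $\mathscr{R}$ are differentially homogeneous.
   Context: $\mathcal{F}$ is an ordinary differential field with derivation $\delta$; $\mathcal{F}\{y_0,\ldots,y_n\}$ is the differential polynomial ring in the differential indeterminates $y_0,\ldots,y_n$; $y_j^{(k)}$ denotes the $k$-th derivative. A differential polynomial $f$ is differentially homogeneous of degree $m$ if, for a new differential indeterminate $t$, $f(ty_0,\ldots,ty_n)=t^m f(y_0,\ldots,y_n)$ in $\mathcal{F}\{t,y_0,\ldots,y_n\}$. For a ranking $\mathscr{R}$ (a total order on all derivatives $y_j^{(k)}$ compatible with differentiation), the leader of $f\notin\mathcal{F}$ is the highest-ranked derivative $y_i^{(o)}$ occurring in $f$; writing $f=I_f\,(y_i^{(o)})^l+\cdots$ as a polynomial in the leader, $I_f$ is the initial and $\partial f/\partial y_i^{(o)}$ is the separant. *)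

(* Defs.v *)
From HB Require Import structures.
From mathcomp Require Import all_boot all_order all_algebra.
From mathcomp.multinomials Require Import mpoly.

Set Implicit Arguments.
Unset Strict Implicit.
Unset Printing Implicit Defensive.

Import GRing.Theory.
Local Open Scope ring_scope.

Definition is_derivation (F : fieldType) (delta : F -> F) : Prop :=
  (forall a b, delta (a + b) = delta a + delta b) /\
  (forall a b, delta (a * b) = delta a * b + a * delta b).

(* F{y_0,..,y_n} is the union over K of the polynomial rings in the          *)
(* derivatives y_j^(k), j <= n, k <= K.  We model the order-<=K part as      *)
(* {mpoly F[(n.+1) * (K.+1)]}, where the variable v stands for               *)
(*      y_(v %/ K.+1)^(v %% K.+1).                                           *)
Notation dpoly F n K := {mpoly F[(n.+1) * (K.+1)]}.

(* The ring F{t,y_0,..,y_n} (order <= K): variables                          *)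
(*   lshift _ i  (i : 'I_K.+1)                 stands for t^(i)              *)
(*   rshift _ v  (v : 'I_((n.+1)*(K.+1)))      stands for the same y as v.   *)
Notation tdpoly F n K := {mpoly F[K.+1 + (n.+1) * (K.+1)]}.

Definition vord (K N : nat) (v : 'I_N) : nat := (v %% K.+1)%N.
Definition vidx (K N : nat) (v : 'I_N) : nat := (v %/ K.+1)%N.

(* the variable v - i, i.e. y_j^(k-i) when v = y_j^(k) and i <= k *)
Definition ord_subn (N : nat) (v : 'I_N) (i : nat) : 'I_N :=
  Ordinal (leq_ltn_trans (leq_subr i v) (ltn_ord v)).

Section DHom.
Variables (F : fieldType) (n K : nat).

Definition tvar (i : 'I_K.+1) : tdpoly F n K := 'X_(lshift _ i).
Definition yvar (v : 'I_((n.+1) * (K.+1))) : tdpoly F n K := 'X_(rshift _ v).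

(* image of y_j^(k) under y_j |-> t*y_j :  (t y_j)^(k) = sum_i C(k,i) t^(i) y_j^(k-i) *)
Definition ty_image (v : 'I_((n.+1) * (K.+1))) : tdpoly F n K :=
  \sum_(i < K.+1 | (i <= vord K v)%N)
     ('C(vord K v, i))%:R * tvar i * yvar (ord_subn v i).

Definition embed_y (f : dpoly F n K) : tdpoly F n K :=
  mmap (@mpolyC _ F) yvar f.

Definition subst_ty (f : dpoly F n K) : tdpoly F n K :=
  mmap (@mpolyC _ F) ty_image f.

Definition is_dhomog (m : nat) (f : dpoly F n K) : Prop :=
  subst_ty f = tvar ord0 ^+ m * embed_y f.

Definition in_base (f : dpoly F n K) : Prop := f = (f@_0%MM)%:MP.

Definition occurs (v : 'I_((n.+1) * (K.+1))) (f : dpoly F n K) : Prop :=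
  exists2 m, m \in msupp f & (0 < m v)%N.

Definition degv (v : 'I_((n.+1) * (K.+1))) (f : dpoly F n K) : nat :=
  \max_(m <- msupp f) m v.

(* leading coefficient of f viewed as a polynomial in v (the initial if v is the leader) *)
Definition initial (v : 'I_((n.+1) * (K.+1))) (f : dpoly F n K) : dpoly F n K :=
  \sum_(m <- msupp f | m v == degv v f) f@_m *: 'X_[(m - U_(v) *+ degv v f)%MM].

(* partial derivative of f with respect to v (the separant if v is the leader) *)
Definition separant (v : 'I_((n.+1) * (K.+1))) (f : dpoly F n K) : dpoly F n K :=
  mderiv v f.

End DHom.

(* Rankings of y_0..y_n: a strict total order "r u w" (u ranked below w) on   *)
(* all derivatives (j, k) ~ y_j^(k), compatible with differentiation:        *)
(*   u < u'   and   u < w  ->  u' < w'.                                      *)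
Definition is_ranking (n : nat) (r : rel ('I_n.+1 * nat)) : Prop :=
  [/\ (forall u, ~~ r u u),
      (forall u w z, r u w -> r w z -> r u z),
      (forall u w, u != w -> r u w || r w u),
      (forall j k, r (j, k) (j, k.+1)) &
      (forall u w, r u w -> r (u.1, u.2.+1) (w.1, w.2.+1))].

Definition der_of (n K : nat) (v : 'I_((n.+1) * (K.+1))) : 'I_n.+1 * nat :=
  (inord (vidx K v), vord K v).

Definition is_leader (F : fieldType) (n K : nat) (r : rel ('I_n.+1 * nat))
    (f : dpoly F n K) (v : 'I_((n.+1) * (K.+1))) : Prop :=
  occurs v f /\
  (forall w, occurs w f -> w != v -> r (der_of w) (der_of v)).

Arguments tvar {F n K} i.
Arguments yvar {F n K} v.
Arguments ty_image {F n K} v.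
Arguments embed_y {F n K} f.
Arguments subst_ty {F n K} f.
Arguments is_dhomog {F n K} m f.
Arguments in_base {F n K} f.
Arguments occurs {F n K} v f.
Arguments degv {F n K} v f.
Arguments initial {F n K} v f.
Arguments separant {F n K} v f.
Arguments is_leader {F n K} r f v.

(* Main.v *)
Require Import Defs.
From HB Require Import structures.
From mathcomp Require Import all_boot all_order all_algebra.
From mathcomp.multinomials Require Import mpoly.
Import GRing.Theory.
From mathcomp Require Import zify.
Local Open Scope ring_scope.

Lemma morph_ext (R : nzRingType) (N : nat) (S : nzRingType)
    (G1 G2 : {mpoly R[N]} -> S) (p : {mpoly R[N]}) :
  G1 0 = 0 -> G2 0 = 0 -> {morph G1 : x y / x + y} -> {morph G2 : x y / x + y} ->
  G1 1 = 1 -> G2 1 = 1 -> {morph G1 : x y / x * y} -> {morph G2 : x y / x * y} ->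
  (forall c, G1 c%:MP = G2 c%:MP) ->
  (forall i, (exists2 m, m \in msupp p & (0 < m i)%N) -> G1 'X_i = G2 'X_i) ->
  G1 p = G2 p.
Proof.
move=> G10 G20 G1D G2D G11 G21 G1M G2M HC HX.
rewrite (mpolyE p) (big_morph G1 G1D G10) (big_morph G2 G2D G20).
rewrite big_seq [RHS]big_seq; apply: eq_bigr => m mp.
rewrite -mul_mpolyC G1M G2M HC; congr (_ * _).
rewrite mpolyXE_id (big_morph G1 G1M G11) (big_morph G2 G2M G21).
apply: eq_bigr => i _.
have powE G : G 1 = 1 -> {morph G : x y / x * y} -> forall x k, G (x ^+ k) = G x ^+ k.
  by move=> H1 HM x; elim=> [|k IH]; rewrite ?expr0 // !exprS HM IH.
rewrite !powE //; case: (posnP (m i)) => [->|pos]; first by rewrite !expr0.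
by rewrite HX //; exists m.
Qed.

Lemma mmapXU (R : nzRingType) (N : nat) (S : comNzRingType) (f : {rmorphism R -> S})
   (h : 'I_N -> S) i : mmap f h 'X_i = h i.
Proof. by rewrite mmapX mmap1U. Qed.

Definition hP (R : nzRingType) (N : nat) (x : 'I_N) (i : 'I_N) : {poly {mpoly R[N]}} :=
  if i == x then 'X else ('X_i)%:P.
Arguments hP {R N} x i.
Notation Psi R x := (mmap (polyC \o (@mpolyC _ R)) (@hP R _ x)).

Section Gen.
Variables (R : comNzRingType) (N : nat) (x : 'I_N).
Implicit Types (p : {mpoly R[N]}).

Lemma PsiC c : Psi R x c%:MP = (c%:MP)%:P.
Proof. by rewrite mmapC. Qed.

Lemma PsiX i : Psi R x 'X_i = hP x i.
Proof. by rewrite mmapXU. Qed.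

Lemma Psi_eval p : (Psi R x p).['X_x] = p.
Proof.
apply: (@morph_ext _ _ _ (fun p => (Psi R x p).['X_x]) id) => //=.
- by rewrite rmorph0 horner0.
- by move=> a b; rewrite rmorphD hornerD.
- by rewrite rmorph1 hornerC.
- by move=> a b; rewrite rmorphM hornerM.
- by move=> c; rewrite PsiC hornerC.
- by move=> i _; rewrite PsiX /hP; case: eqP => [->|_]; rewrite ?hornerX ?hornerC.
Qed.

Lemma PsiXm m : Psi R x 'X_[m] = ('X_[(m - U_(x) *+ m x)%MM])%:P * 'X^(m x).
Proof.
rewrite mmapX /mmap1 (bigD1 x) //= /hP eqxx.
rewrite [in RHS]mpolyXE_id [in RHS](bigD1 x) //=.
rewrite mnmBE mulmnE mnm1E eqxx mul1n subnn expr0 mul1r.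
rewrite rmorph_prod mulrC; congr (_ * _); apply: eq_bigr => i /negPf ni.
by rewrite ni rmorphXn /= mnmBE mulmnE mnm1E eq_sym ni mul0n subn0.
Qed.

Lemma Psi_coef p j :
  (Psi R x p)`_j = \sum_(m <- msupp p | m x == j) p@_m *: 'X_[(m - U_(x) *+ j)%MM].
Proof.
rewrite {1}(mpolyE p) raddf_sum coef_sum [RHS]big_mkcond /=; apply: eq_bigr => m _.
rewrite mmapZ PsiXm /= mulrA -rmorphM /= coefCM coefXn mul_mpolyC.
by rewrite eq_sym; case: eqP => [->|_]; rewrite ?mulr1 ?mulr0.
Qed.

Lemma PsiX_deriv m : Psi R x ('X_[m]^`M(x)) = (Psi R x 'X_[m])^`().
Proof.
rewrite mderivX mmapZ /= rmorph_nat !PsiXm deriv_mulC derivXn.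
rewrite mnmBE mnm1E eqxx.
case E: (m x) => [|k]; first by rewrite !mulr0n mul0r mulr0.
rewrite subn1 /=.
have -> : (m - U_(x) - U_(x) *+ k = m - U_(x) *+ k.+1)%MM.
  apply/mnmP => i; rewrite !mnmBE !mulmnE mulnS -subnDA; congr (_ - _)%N.

by rewrite rmorph_nat mulrCA mulr_natl mulrnAr.
Qed.

Lemma Psi_deriv p : Psi R x (p^`M(x)) = (Psi R x p)^`().
Proof.
elim/mpolyind: p => [|c m p _ _ IH]; first by rewrite mderiv0 !raddf0.
rewrite mderivD mderivZ !raddfD /= IH !mmapZ /= deriv_mulC PsiX_deriv.
by [].
Qed.

End Gen.

Lemma coef_comp_lin (R : comNzRingType) (p : {poly R}) (a c : R) D :
  (forall j, (D < j)%N -> p`_j = 0) ->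
  (p \Po (a%:P * 'X + c%:P))`_D = p`_D * a ^+ D.
Proof.
move=> hp; set r := a%:P * 'X + c%:P.
have pw i : (r ^+ i)`_i = a ^+ i /\ forall j, (i < j)%N -> (r ^+ i)`_j = 0.
  elim: i => [|i [IH1 IH2]].
    by rewrite expr0 coef1; split=> // -[|j] // _; rewrite coef1.
  have E : r ^+ i.+1 = r ^+ i * a%:P * 'X + r ^+ i * c%:P.
    by rewrite exprSr /r mulrDr mulrA.
  rewrite E; split.
    by rewrite coefD coefMX /= !coefMC IH1 IH2 // mul0r addr0 exprSr.
  move=> [|j] // hj; rewrite coefD coefMX /= coefMC coefMC !IH2 ?mul0r ?addr0 //.
  by apply: ltn_trans hj.
rewrite coef_comp_poly.
rewrite (eq_bigr (fun k : 'I_(size p) => if (k : nat) == D then p`_D * a ^+ D else 0)); last first.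
  move=> k _; case: eqP => [->|ne]; first by rewrite (pw D).1.
  case: (ltngtP k D) => [lt|gt|eq]; last by [].
  - by rewrite (pw k).2 // mulr0.
  - by rewrite hp // mul0r.
rewrite -big_mkcond /=.
rewrite (big_ord1_eq _ (fun=> p`_D * a ^+ D)) /=; case: ltnP => // le.
by rewrite nth_default // mul0r.
Qed.

Section Spec.
Variables (F : fieldType) (n K : nat).
Local Notation N := ((n.+1) * (K.+1))%N.
Local Notation NT := (K.+1 + (n.+1) * (K.+1))%N.
Local Notation t := (@tvar F n K ord0).
Local Notation phi := (mmap (@mpolyC NT F) (@ty_image F n K)).
Local Notation eps := (mmap (@mpolyC NT F) (@yvar F n K)).

Lemma tvar_neq0 i : @tvar F n K i != 0.
Proof.
apply/eqP => h; have := congr1 (mcoeff U_(lshift N i)) h.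
by rewrite /tvar mcoeff0 mcoeffX eqxx => /eqP; rewrite oner_eq0.
Qed.

Definition hz (u : 'I_NT) : {mpoly F[N]} :=
  match split u with inl _ => 0 | inr w => 'X_w end.
Local Notation zeta := (mmap (@mpolyC N F) hz).

Lemma zeta_t i : zeta (@tvar F n K i) = 0.
Proof. by rewrite /tvar mmapXU /hz (unsplitK (inl i : 'I_K.+1 + 'I_N)). Qed.

Lemma zeta_embed g : zeta (embed_y g) = g.
Proof.
apply: (@morph_ext _ _ _ (fun g => zeta (embed_y g)) id) => //=; rewrite /embed_y.
- by rewrite !rmorph0.
- by move=> a b; rewrite !rmorphD.
- by rewrite !rmorph1.
- by move=> a b; rewrite !rmorphM.
- by move=> c; rewrite !mmapC.
- by move=> i _; rewrite mmapXU /yvar mmapXU /hz (unsplitK (inr i : 'I_K.+1 + 'I_N)).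
Qed.

Lemma cancel_t (g : dpoly F n K) a b :
  subst_ty g * t ^+ a = t ^+ b * embed_y g -> exists c, is_dhomog c g.
Proof.
move=> E; have t0 := @tvar_neq0 ord0.
case: (leqP a b) => hab.
  exists (b - a)%N; rewrite /is_dhomog; apply: (mulIf (expf_neq0 a t0)).
  by rewrite E -mulrA (mulrC (embed_y g)) mulrA -exprD subnK.
exists 0%N.
suff -> : g = 0 by rewrite /is_dhomog /subst_ty /embed_y !raddf0 mulr0.
have E2 : subst_ty g * t ^+ (a - b) = embed_y g.
  apply: (mulIf (expf_neq0 b t0)).
  rewrite -mulrA -exprD subnK; [by rewrite E mulrC | exact: ltnW].
have := congr1 zeta E2.
rewrite zeta_embed rmorphM rmorphXn /= zeta_t expr0n subn_eq0 leqNgt hab /= mulr0.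
by move<-.
Qed.

Lemma rank_up (r : rel ('I_n.+1 * nat)) : is_ranking r ->
  forall j k i, (0 < i)%N -> r (j, k) (j, (k + i)%N).
Proof.
case=> _ tr _ st _ j k; elim=> // -[|i] IH _; first by rewrite addn1.
by apply: (tr _ _ _ (IH isT)); have := st j (k + i.+1)%N; rewrite -addnS.
Qed.

Lemma sub_same (w v : 'I_N) i : (i <= vord K w)%N -> (w - i)%N = v ->
  vidx K v = vidx K w /\ vord K w = (vord K v + i)%N.
Proof.
rewrite /vord /vidx => hi E.
have ew := divn_eq w K.+1.
have lt : (w %% K.+1 - i < K.+1)%N by rewrite (leq_ltn_trans (leq_subr _ _)) ?ltn_mod.
have ev : (v : nat) = (w %/ K.+1 * K.+1 + (w %% K.+1 - i))%N.
  by rewrite -E {1}ew addnBA.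
rewrite ev divnMDl // modnMDl (divn_small lt) (modn_small lt).
by split; rewrite ?addn0 ?subnK.
Qed.

Lemma noccur_lower (r : rel ('I_n.+1 * nat)) (f : dpoly F n K) (v w : 'I_N) :
  is_ranking r -> is_leader r f v -> occurs w f -> w != v ->
  forall i, (i <= vord K w)%N -> ord_subn w i != v.
Proof.
move=> rk [_ ld] ow nwv i hi; apply/eqP => E.
have E' : (w - i)%N = v by rewrite -E.
have [ei eo] := @sub_same w v i hi E'.
case: (posnP i) => [i0|ip].
  by move/eqP: nwv; apply; apply/val_inj; rewrite -E /= i0 subn0.
have h1 := ld w ow nwv.
have h2 : r (der_of v) (der_of w).
  by rewrite /der_of ei eo; exact: rank_up.
case: rk => irr tr _ _ _.
by move: (irr (der_of v)); rewrite (tr _ _ _ h2 h1).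
Qed.

Section PT.
Variable v : 'I_N.
Local Notation rv := (rshift K.+1 v).
Local Notation Pt := (Psi F rv).
Local Notation Py := (Psi F v).

Lemma Pt_tvar i : Pt (@tvar F n K i) = (tvar i)%:P.
Proof. by rewrite /tvar PsiX /hP eq_lrshift. Qed.

Lemma Pt_yvar u : u != v -> Pt (@yvar F n K u) = (yvar u)%:P.
Proof. by move=> /negPf h; rewrite /yvar PsiX /hP (inj_eq (@rshift_inj _ _)) h. Qed.

Lemma Pt_yvar_v : Pt (@yvar F n K v) = 'X.
Proof. by rewrite /yvar PsiX /hP eqxx. Qed.

Lemma Pt_ty_neq w : (forall i, (i <= vord K w)%N -> ord_subn w i != v) ->
  Pt (@ty_image F n K w) = (ty_image w)%:P.
Proof.
move=> h; rewrite /ty_image !rmorph_sum; apply: eq_bigr => i hi.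
by rewrite !rmorphM /= !rmorph_nat Pt_tvar Pt_yvar ?h.
Qed.

Lemma r_form : exists c, Pt (@ty_image F n K v) = (tvar ord0)%:P * 'X + c%:P.
Proof.
rewrite /ty_image (bigD1 ord0) //=.
set S := (\sum_(i | _) _).
exists S; rewrite rmorphD; congr (_ + _).
  have -> : ord_subn v 0 = v by apply: val_inj; rewrite /= subn0.
  by rewrite bin0 mulr1n mul1r !rmorphM /= Pt_tvar Pt_yvar_v.
rewrite /S /= !rmorph_sum; apply: eq_bigr => i /andP [hi nz].
rewrite !rmorphM /= !rmorph_nat Pt_tvar Pt_yvar //.
apply/eqP => E; move: nz; apply/negP; rewrite negbK; apply/eqP/val_inj => /=.
have iv : (i <= v)%N := leq_trans hi (leq_mod _ _).
have : (v - i)%N = v by rewrite -[in RHS]E.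
lia.
Qed.

End PT.
End Spec.

Theorem mainTheorem1 (F : fieldType) (delta : F -> F)
    (Hdelta : is_derivation delta) (n K m : nat)
    (f : dpoly F n K) (r : rel ('I_n.+1 * nat)) (v : 'I_((n.+1) * (K.+1))) :
  f != 0 -> ~ in_base f -> is_dhomog m f ->
  is_ranking r -> is_leader r f v ->
  (exists m1, is_dhomog m1 (initial v f)) /\ (exists m2, is_dhomog m2 (separant v f)).
Proof.
move=> _ _ Hf rk ld.
pose rv := rshift K.+1 v.
pose t := @tvar F n K ord0.
have [c Hr] := @r_form F n K v.
have EA : Psi F rv (subst_ty f) =
    (map_poly (mmap (@mpolyC (K.+1 + (n.+1) * (K.+1))%N F) (@ty_image F n K)) (Psi F v f))
      \Po (Psi F rv (@ty_image F n K v)).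
  rewrite /subst_ty.
  apply: (@morph_ext _ _ _ (fun g => Psi F rv (mmap (@mpolyC (K.+1 + (n.+1) * (K.+1))%N F) (@ty_image F n K) g))
     (fun g => (map_poly (mmap (@mpolyC (K.+1 + (n.+1) * (K.+1))%N F) (@ty_image F n K)) (Psi F v g))
        \Po (Psi F rv (@ty_image F n K v)))) => /=.
  all: rewrite ?rmorph0 ?rmorph1 //; try (by move=> a b; rewrite !rmorphD);
     try (by move=> a b; rewrite !rmorphM).
  - by move=> c'; rewrite !mmapC /= map_polyC /= mmapC comp_polyC.
  - move=> i oi; rewrite mmapXU PsiX /hP; case: eqP => [->|/eqP ne].
      by rewrite map_polyX comp_polyX.
    rewrite map_polyC /= mmapXU comp_polyC Pt_ty_neq //.
    exact: noccur_lower rk ld oi ne.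
have EB : forall g : dpoly F n K, Psi F rv (embed_y g) =
    map_poly (mmap (@mpolyC (K.+1 + (n.+1) * (K.+1))%N F) (@yvar F n K)) (Psi F v g).
  move=> g; rewrite /embed_y.
  apply: (@morph_ext _ _ _ (fun g => Psi F rv (mmap (@mpolyC (K.+1 + (n.+1) * (K.+1))%N F) (@yvar F n K) g))
     (fun g => map_poly (mmap (@mpolyC (K.+1 + (n.+1) * (K.+1))%N F) (@yvar F n K)) (Psi F v g))) => /=.
  all: rewrite ?rmorph0 ?rmorph1 //; try (by move=> a b; rewrite !rmorphD);
     try (by move=> a b; rewrite !rmorphM).
  - by move=> c'; rewrite !mmapC /= map_polyC /= mmapC.
  - move=> i _; rewrite mmapXU (@PsiX _ _ v i) /hP; case: eqP => [->|/eqP ne].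
      by rewrite Pt_yvar_v map_polyX.
    by rewrite Pt_yvar // map_polyC /= mmapXU.
have E : (map_poly (mmap (@mpolyC (K.+1 + (n.+1) * (K.+1))%N F) (@ty_image F n K)) (Psi F v f))
      \Po (Psi F rv (@ty_image F n K v)) =
    (t ^+ m)%:P * map_poly (mmap (@mpolyC (K.+1 + (n.+1) * (K.+1))%N F) (@yvar F n K)) (Psi F v f).
  by rewrite -EA Hf rmorphM rmorphXn /= Pt_tvar EB rmorphXn.
split.
- pose D := degv v f.
  have qD : forall j, (D < j)%N -> (Psi F v f)`_j = 0.
    move=> j hj; rewrite Psi_coef big1_seq // => m' /andP [/eqP e mm].
    have le : (m' v <= D)%N.
      by rewrite /D /degv; apply: (leq_bigmax_seq (F := fun m0 : 'X_{1..(n.+1 * K.+1)} => m0 v)).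
    by move: hj; rewrite -e ltnNge le.
  have qI : (Psi F v f)`_D = initial v f by rewrite Psi_coef.
  have := congr1 (fun P : {poly tdpoly F n K} => P`_D) E.
  rewrite Hr coef_comp_lin; last by move=> j hj; rewrite coef_map /= qD // raddf0.
  rewrite coefCM !coef_map /= qI => Ec.
  by apply: (@cancel_t F n K _ D m).
- have Ed := congr1 (@deriv _ : {poly tdpoly F n K} -> _) E.
  have drr : (Psi F rv (@ty_image F n K v))^`() = t%:P.
    by rewrite Hr derivD derivC addr0 deriv_mulC derivX mulr1.
  rewrite deriv_comp drr deriv_map deriv_mulC deriv_map -Psi_deriv in Ed.
  have Ev := congr1 (fun P : {poly tdpoly F n K} => P.['X_rv]) Ed.
  rewrite /= hornerM horner_comp Psi_eval hornerC hornerCM in Ev.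
  have tyv : @ty_image F n K v = mmap (@mpolyC (K.+1 + (n.+1) * (K.+1))%N F) (@ty_image F n K) 'X_v by rewrite mmapXU.
  have yv : 'X_rv = mmap (@mpolyC (K.+1 + (n.+1) * (K.+1))%N F) (@yvar F n K) 'X_v by rewrite mmapXU.
  rewrite tyv horner_map Psi_eval yv horner_map Psi_eval in Ev.
  apply: (@cancel_t F n K _ 1 m).
  by rewrite expr1.
Qed.
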